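(* Let $\mathbb{U},B\in\mathbb{R}^{n\times n}$ and consider the bilinear system $z_{t+1}=\mathbb{U}z_t+u_tBz_t$, $z_t\in\mathbb{R}^n$, $u_t\in\mathbb{R}$. Let $Q=Q^\top\succ0$ in $\mathbb{R}^{n\times n}$ and $y\in\mathbb{R}^n$ be such that, for some real number $\varepsilon\neq0$, the matrix inequality \[ \begin{pmatrix} -Q & 0 & y & Q\mathbb{U}^\top\\ 0 & -\varepsilon Q & 0 & QB^\top\\ y^\top & 0 & -\frac{1}{\varepsilon} & 0\\ \mathbb{U}Q & BQ & 0 & -Q \end{pmatrix}\prec 0 \] holds. Then the linear state feedback $u_t=k^\top z_t$ with gain $k=Q^{-1}y$ stabilizes the bilinear system inside the ellipsoid $\mathscr{E}=\{z\in\mathbb{R}^n: z^\top Q^{-1}z\le1\}$, and the quadratic form $V(z)=z^\top Q^{-1}z$ is a control Lyapunov function for the bilinear system.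
   Context: $\prec0$ denotes negative definiteness of a symmetric matrix. A discrete-time control Lyapunov function is a radially unbounded positive definite function $V$ with $V(0)=0$, $V(z)>0$ for $z\ne0$, such that for every state $z_t$ there exists an input $u_t$ with $V(z_{t+1})-V(z_t)<0$. ''Stabilizes inside $\mathscr{E}$'' means that along the closed-loop system $z_{t+1}=\mathbb{U}z_t+(k^\top z_t)Bz_t$ the quantity $V$ strictly decreases for nonzero states in $\mathscr{E}$. *)

(* Defs.v *)
From mathcomp Require Import all_boot all_order all_algebra.
From mathcomp Require Import reals.
Set Implicit Arguments. Unset Strict Implicit. Unset Printing Implicit Defensive.
Import Order.TTheory GRing.Theory Num.Theory.
Local Open Scope ring_scope.

Section Defs.
Variable R : realType.

Definition posdef m (M : 'M[R]_m) : Prop :=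
  M^T = M /\ forall x : 'cV[R]_m, x != 0 -> 0 < (x^T *m M *m x) 0 0.
Definition negdef m (M : 'M[R]_m) : Prop :=
  M^T = M /\ forall x : 'cV[R]_m, x != 0 -> (x^T *m M *m x) 0 0 < 0.

Definition lmi_mx n (U B Q : 'M[R]_n) (y : 'cV[R]_n) (eps : R)
  : 'M[R]_(n + (n + (1 + n))) :=
  col_mx (row_mx (- Q) (row_mx 0 (row_mx y (Q *m U^T))))
 (col_mx (row_mx 0 (row_mx (- (eps *: Q)) (row_mx 0 (Q *m B^T))))
 (col_mx (row_mx y^T (row_mx 0 (row_mx ((- eps^-1)%:M : 'M[R]_1) 0)))
         (row_mx (U *m Q) (row_mx (B *m Q) (row_mx 0 (- Q)))))).

Definition bilin n (U B : 'M[R]_n) (z : 'cV[R]_n) (u : R) : 'cV[R]_n :=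
  U *m z + u *: (B *m z).

Definition quadV n (P : 'M[R]_n) (z : 'cV[R]_n) : R := (z^T *m P *m z) 0 0.

Definition sqnorm n (z : 'cV[R]_n) : R := (z^T *m z) 0 0.

Definition is_clf n (F : 'cV[R]_n -> R -> 'cV[R]_n) (V : 'cV[R]_n -> R) : Prop :=
  [/\ V 0 = 0,
      (forall z, z != 0 -> 0 < V z),
      (forall M : R, exists r : R, forall z, r <= sqnorm z -> M <= V z) &
      (forall z, z != 0 -> exists u : R, V (F z u) - V z < 0)].
End Defs.

(* Main.v *)
Require Import Defs.
From mathcomp Require Import all_boot all_order all_algebra.
From mathcomp Require Import reals ring lra.
Import Order.TTheory GRing.Theory Num.Theory.
Local Open Scope ring_scope.

Section S.
Variable R : realType.
Implicit Types (A B : 'M[R]_1).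
Lemma e_add A B : (A + B) 0 0 = A 0 0 + B 0 0. Proof. by rewrite mxE. Qed.
Lemma e_opp A : (- A) 0 0 = - A 0 0. Proof. by rewrite mxE. Qed.
Lemma e_scale (c : R) A : (c *: A) 0 0 = c * A 0 0. Proof. by rewrite mxE. Qed.
Lemma e_tr A : (A^T) 0 0 = A 0 0. Proof. by rewrite mxE. Qed.

Lemma L1 n (U B Q : 'M[R]_n) (y : 'cV[R]_n) (eps : R) a b (c : R) d :
  Q^T = Q -> negdef (lmi_mx U B Q y eps) -> col_mx a (col_mx b (col_mx (c%:M : 'M[R]_1) d)) != 0 ->
  - (a^T *m Q *m a) 0 0 + 2 * (c * (y^T *m a) 0 0) + 2 * (d^T *m U *m Q *m a) 0 0
  - eps * (b^T *m Q *m b) 0 0 + 2 * (d^T *m B *m Q *m b) 0 0 - c * c / eps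
  - (d^T *m Q *m d) 0 0 < 0.
Proof.
move=> Qs [_ H] /H.
rewrite /lmi_mx !tr_col_mx !mul_row_col !mulmxDl -!mulmxA !mul_row_col.
rewrite !mul0mx !addr0 !add0r !mulNmx !mulmxA.
rewrite !mulmxDr !mulmxN !mulmxA !mul_mx_scalar ?mul_scalar_mx -?scalemxAl -!scalemxAr.
rewrite !(e_add, e_opp, e_scale).
rewrite tr_scalar_mx mul_scalar_mx -!scalemxAl !e_scale.
have -> : (a^T *m y) 0 0 = (y^T *m a) 0 0 by rewrite -e_tr trmx_mul trmxK.
have -> : (a^T *m Q *m U^T *m d) 0 0 = (d^T *m U *m Q *m a) 0 0.
  by rewrite -e_tr !trmx_mul !trmxK Qs !mulmxA.
have -> : (b^T *m Q *m B^T *m d) 0 0 = (d^T *m B *m Q *m b) 0 0.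
  by rewrite -e_tr !trmx_mul !trmxK Qs !mulmxA.
have -> : (c%:M : 'M[R]_1) 0 0 = c by rewrite mxE.
move=> h; apply: le_lt_trans h; rewrite le_eqVlt; apply/orP; left; apply/eqP.
ring.
Qed.

Lemma posdef_unit n (Q : 'M[R]_n) : posdef Q -> Q \in unitmx.
Proof.
move=> [Qs H]; rewrite unitmxE unitfE; apply/negP => /det0P [v vn0 vQ].
have := H v^T; rewrite trmxK trmx_eq0 vn0 => /(_ isT).
by rewrite vQ mul0mx mxE ltxx.
Qed.

Lemma psd_ge0 n (Q : 'M[R]_n) (x : 'cV[R]_n) : posdef Q -> 0 <= (x^T *m Q *m x) 0 0.
Proof.
move=> [_ H]; have [->|xn0] := eqVneq x 0.
  by rewrite trmx0 !mul0mx mxE.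
exact/ltW/H.
Qed.

Lemma CS n (Q : 'M[R]_n) (a b : 'cV[R]_n) : posdef Q ->
  (a^T *m Q *m b) 0 0 ^+ 2 <= (a^T *m Q *m a) 0 0 * (b^T *m Q *m b) 0 0.
Proof.
move=> QP; have Qs := QP.1.
set qa := (a^T *m Q *m a) 0 0; set qb := (b^T *m Q *m b) 0 0.
set be := (a^T *m Q *m b) 0 0.
have hba : (b^T *m Q *m a) 0 0 = be by rewrite /be -e_tr !trmx_mul trmxK Qs mulmxA.
have := @psd_ge0 _ Q (qb *: a - be *: b) QP.
rewrite [(_ - _)^T]raddfB /= ![(_ *: _)^T]linearZ /= !mulmxBl !mulmxBr -!scalemxAl -!scalemxAr.
rewrite !(e_add, e_opp, e_scale) -/qa -/qb -/be hba => h.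
have qb0 : 0 <= qb by exact: (@psd_ge0 _ Q _ QP).
have qa0 : 0 <= qa by exact: (@psd_ge0 _ Q _ QP).
have [qbz|qbp] := eqVneq qb 0.
  have hb : b = 0.
    apply/eqP; apply/negP => /negP bn0; have := QP.2 b bn0; rewrite -/qb qbz ltxx //.
  by rewrite /be hb mulmx0 mxE expr0n /= qbz mulr0.
have qbp' : 0 < qb by rewrite lt_def qbp qb0.
nra.
Qed.


Lemma quad_sandwich n (Q P : 'M[R]_n) (u v : 'cV[R]_n) :
  P^T = P -> P *m Q = 1%:M ->
  ((P *m u)^T *m Q *m (P *m v)) = u^T *m P *m v.
Proof.
move=> PT PQ; rewrite trmx_mul PT !mulmxA -(mulmxA _ P Q) PQ mulmx1 //.
Qed.

Lemma sqnorm_bound n (Q : 'M[R]_n) (w : 'cV[R]_n) : posdef Q ->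
  sqnorm (Q *m w) <= (\sum_i Q i i) * (w^T *m Q *m w) 0 0.
Proof.
move=> QP; rewrite /sqnorm mxE mulr_suml; apply: ler_sum => i _.
rewrite mxE.
have e1 : (Q *m w) i 0 = ((delta_mx i 0 : 'cV[R]_n)^T *m Q *m w) 0 0.
  by rewrite trmx_delta -rowE -row_mul !mxE.
have e2 : Q i i = ((delta_mx i 0 : 'cV[R]_n)^T *m Q *m (delta_mx i 0 : 'cV[R]_n)) 0 0.
  by rewrite trmx_delta -mulmxA -(colE i Q) -(rowE i (col i Q)) !mxE.
rewrite e1 e2 -expr2; exact: CS.
Qed.

End S.

Theorem theorem4 (R : realType) (n : nat) (U B Q : 'M[R]_n) (y : 'cV[R]_n) (eps : R) :
  posdef Q -> eps != 0 -> negdef (lmi_mx U B Q y eps) ->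
  let k := invmx Q *m y in
  let V := quadV (invmx Q) in
  (forall z : 'cV[R]_n, z != 0 -> V z <= 1 ->
     V (bilin U B z ((k^T *m z) 0 0)) - V z < 0)
  /\ is_clf (bilin U B) V.
Proof.
move=> QPd epsn0 LN k V.
have Qs := QPd.1; have Qu := @posdef_unit R n Q QPd.
have PT : (invmx Q)^T = invmx Q by rewrite trmx_inv Qs.
have PQ : invmx Q *m Q = 1%:M := mulVmx Qu.
have QP1 : Q *m invmx Q = 1%:M := mulmxV Qu.
rewrite /V /k; move: PT PQ QP1 {V k}; set P := invmx Q => PT PQ QP1.
have eps_pos : 0 < eps.
  have := @L1 R n U B Q y eps 0 0 1 0 Qs LN.
  rewrite !col_mx_eq0 !eqxx /= andbT oner_eq0 /= => /(_ isT).
  rewrite !trmx0 !mul0mx !mulmx0 !mxE !mul1r => h.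
  have : 0 < eps^-1 by lra.
  by rewrite invr_gt0.
have key : forall (z w : 'cV[R]_n) (c : R), z != 0 ->
  quadV P (U *m z + B *m w) - quadV P z - eps * quadV P w
    + 2 * c * (((P *m y)^T *m z) 0 0) - c * c / eps < 0.
  move=> z w c zn0; set x := U *m z + B *m w.
  have := @L1 R n U B Q y eps (P *m z) (P *m w) c (P *m x) Qs LN.
  rewrite !col_mx_eq0.
  have -> : (P *m z == 0) = false.
    apply/negbTE; apply: contra zn0 => /eqP h.
    by rewrite -(mul1mx z) -QP1 -mulmxA h mulmx0.
  move=> /(_ isT).
  rewrite !quad_sandwich //.
  have -> : (y^T *m (P *m z)) = (P *m y)^T *m z by rewrite trmx_mul PT mulmxA.
  have hU : ((P *m x)^T *m U *m Q *m (P *m z)) = x^T *m P *m U *m z.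
    by rewrite trmx_mul PT !mulmxA -(mulmxA _ Q P) QP1 mulmx1.
  have hB : ((P *m x)^T *m B *m Q *m (P *m w)) = x^T *m P *m B *m w.
    by rewrite trmx_mul PT !mulmxA -(mulmxA _ Q P) QP1 mulmx1.
  rewrite hU hB.
  have hx : (x^T *m P *m x) 0 0 = (x^T *m P *m U *m z) 0 0 + (x^T *m P *m B *m w) 0 0.
    by rewrite {2}/x mulmxDr e_add !mulmxA.
  rewrite /quadV hx.
  move=> h; apply: le_lt_trans h; rewrite le_eqVlt; apply/orP; left; apply/eqP; ring.
have V0 : quadV P 0 = 0 by rewrite /quadV trmx0 !mul0mx mxE.
have Vsand : forall z, quadV P z = ((P *m z)^T *m Q *m (P *m z)) 0 0.
  by move=> z; rewrite quad_sandwich.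
have Vge0 : forall z, 0 <= quadV P z.
  by move=> z; rewrite Vsand; apply: psd_ge0.
split.
  move=> z zn0 Vz1; set s := ((P *m y)^T *m z) 0 0.
  have := key z (s *: z) (eps * s) zn0.
  have -> : B *m (s *: z) = s *: (B *m z) by rewrite -scalemxAr.
  have -> : quadV P (s *: z) = s * s * quadV P z.
    by rewrite /quadV [(_ *: _)^T]linearZ /= -!scalemxAl -!scalemxAr !e_scale mulrA.
  have -> : eps * s * (eps * s) / eps = eps * (s * s) by field.
  rewrite /bilin -/s => h.
  have : 0 <= eps * (s * s) * (1 - quadV P z).
    apply: mulr_ge0; last by rewrite subr_ge0.
    by apply: mulr_ge0; [exact: ltW | rewrite -expr2; exact: sqr_ge0 ].
  lra.
split.
- exact: V0.
- move=> z zn0; rewrite Vsand; apply: QPd.2.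
  apply: contra zn0 => /eqP h.
  by rewrite -(mul1mx z) -QP1 -mulmxA h mulmx0.
- move=> M; set T := \sum_i Q i i.
  exists (`|M| * (`|T| + 1)) => z hz.
  have hb : sqnorm z <= T * quadV P z.
    have -> : sqnorm z = sqnorm (Q *m (P *m z)) by rewrite mulmxA QP1 mul1mx.
    by rewrite Vsand; apply: sqnorm_bound.
  have v0 := Vge0 z.
  have hT : T * quadV P z <= `|T| * quadV P z by apply: ler_wpM2r => //; exact: ler_norm.
  have hM : M <= `|M| := ler_norm M.
  have hM0 : 0 <= `|M| := normr_ge0 M.
  have hT0 : 0 <= `|T| := normr_ge0 T.
  nra.
- move=> z zn0; exists 0.
  have := key z 0 0 zn0.
  rewrite /bilin scale0r addr0 mulmx0 addr0 V0 => h.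
  lra.
Qed.
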